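(* Let $n>k\geq 1$ be integers, $r=n-k$, and let $k<d_1<d_2<\cdots<d_m\leq n-1$ be integers. Put $s_i=d_i-k+1$ for $i\in[m]$, $s=\mathrm{lcm}(s_1,\ldots,s_{m-1})$ (with $s=1$ if $m=1$), and $\ell=s\cdot s_m^n$. Let $F$ be a finite field with $|F|\geq s_m n$ and let $\lambda_{i,j}$, $i\in[n]$, $j\in[0,s_m-1]$, be $s_m n$ distinct elements of $F$. Let $\mathcal{C}_1$ be the set of all $(\bm c_1,\ldots,\bm c_n)$ with $\bm c_i=(c_{i,0},\ldots,c_{i,\ell-1})\in F^\ell$ satisfying $$\sum_{i=1}^n \lambda_{i,a_i}^{t-1} c_{i,(a,b)}=0\quad\text{for all } a\in[0,s_m^n-1],\ b\in[0,s-1],\ t\in[r].$$ Then $\mathcal{C}_1$ is an $(n,k,\ell)$ MDS array code satisfying the $(1,d_i)$-optimal repair property for every $i\in[m]$ simultaneously.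
   Context: Notation: $[n]=\{1,\ldots,n\}$ and $[i,j]=\{i,i+1,\ldots,j\}$. Each $\tau\in[0,\ell-1]$ is written uniquely as $\tau=b\cdot s_m^n+\sum_{i=1}^n a_i s_m^{i-1}$ with $b\in[0,s-1]$, $a_i\in[0,s_m-1]$; we write $a=(a_1,\ldots,a_n)=\sum_i a_i s_m^{i-1}\in[0,s_m^n-1]$ and $\tau=(a,b)$, so $c_{i,(a,b)}=c_{i,\tau}$. An $(n,k,\ell)$ MDS array code over $F$ is an $F$-linear set of vectors $(\bm c_1,\ldots,\bm c_n)$, $\bm c_i\in F^\ell$ (node $i$ stores $\bm c_i$), of dimension $k\ell$, such that any $k$ of the coordinates $\bm c_i$ determine the whole codeword. For $1\leq h\leq n-k$ and $k\leq d\leq n-h$, the code has the $(h,d)$-optimal repair property if for every $h$-subset $\mathcal{H}\subseteq[n]$ of failed nodes and every $d$-subset $\mathcal{R}\subseteq[n]\setminus\mathcal{H}$ of helper nodes, there is a scheme in which each helper $j\in\mathcal{R}$ sends $\beta=\frac{h\ell}{d-k+h}$ symbols of $F$ computed from $\bm c_j$ and from these $d\beta=\frac{dh\ell}{d-k+h}$ symbols in total all $\bm c_i$, $i\in\mathcal{H}$, can be determined, for every codeword (this meets the cut-set bound $\beta\geq \frac{h\ell}{d-k+h}$ with equality). For $h=1$ this is the MSR (optimal single-node repair) property with repair degree $d$. *)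

(* Defs.v *)
From HB Require Import structures.
From mathcomp Require Import all_boot all_order all_algebra.
Set Implicit Arguments. Unset Strict Implicit. Unset Printing Implicit Defensive.
Import GRing.Theory.
Local Open Scope ring_scope.

(* A codeword of an (n,k,ell) array code over F is a matrix c : 'M[F]_(n,ell);
   row i (0-indexed) is the content c_{i+1} stored by node i+1. *)

(* (n,k,ell) MDS array code: an F-linear set of codewords of dimension k*ell
   (for a finite field: |C| = |F|^(k ell)) such that any k nodes determine
   the whole codeword. *)
Definition is_MDS_array_code (F : finFieldType) (n k ell : nat)
  (C : pred 'M[F]_(n, ell)) : Prop :=
  [/\ C 0,
      (forall (a : F) (x y : 'M[F]_(n, ell)), C x -> C y -> C (a *: x + y)),
      #|[set c | C c]| = (#|F| ^ (k * ell))%N &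
      (forall K : {set 'I_n}, #|K| = k ->
         forall c c', C c -> C c' ->
           (forall i, i \in K -> row i c = row i c') -> c = c')].

Definition repair_beta (k ell h d : nat) : nat := (h * ell %/ (d - k + h))%N.

(* (h,d)-optimal repair property: beta is an integer and for every h-set H of
   failed nodes and every d-set R of helpers disjoint from H, each helper j
   sends beta symbols f j (c_j) computed from its own content only, and from
   these symbols (and nothing else) all c_i, i in H, are recovered. *)
Definition optimal_repair (F : finFieldType) (n k ell : nat)
  (C : pred 'M[F]_(n, ell)) (h d : nat) : Prop :=
  (d - k + h %| h * ell)%N /\
  forall H R : {set 'I_n}, #|H| = h -> #|R| = d -> [disjoint H & R] ->
    exists f : 'I_n -> 'rV[F]_ell -> 'rV[F]_(repair_beta k ell h d),
    exists g : ('I_n -> 'rV[F]_(repair_beta k ell h d)) -> 'M[F]_(n, ell),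
      forall c, C c -> forall i, i \in H ->
        row i (g (fun j => if j \in R then f j (row j c) else 0)) = row i c.

(* Parameters: d : nat -> nat, with d_1,...,d_m meaningful (1-indexed). *)
Definition s_of (k : nat) (d : nat -> nat) (i : nat) : nat := (d i - k + 1)%N.
Definition s_lcm (k m : nat) (d : nat -> nat) : nat :=
  \big[lcmn/1%N]_(1 <= i < m) s_of k d i.
Definition ell_of (n k m : nat) (d : nat -> nat) : nat :=
  (s_lcm k m d * s_of k d m ^ n)%N.

(* digit a_{i+1} of tau = (a,b): a = tau mod s_m^n, b = tau div s_m^n,
   a = sum_i a_i s_m^(i-1); node index i : 'I_n is 0-indexed. *)
Definition digit (sm n i tau : nat) : nat := ((tau %% sm ^ n) %/ sm ^ i %% sm)%N.

(* The code C_1: sum_i lambda_{i,a_i}^(t-1) c_{i,(a,b)} = 0 for all tau=(a,b)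
   and t in [r], r = n - k (t-1 ranges over 'I_r). *)
Definition C1 (F : finFieldType) (n k m : nat) (d : nat -> nat)
  (lambda : 'I_n -> nat -> F) : pred 'M[F]_(n, ell_of n k m d) :=
  fun c => [forall tau : 'I_(ell_of n k m d), forall t : 'I_(n - k),
    \sum_(i < n) lambda i (digit (s_of k d m) n i tau) ^+ t * c i tau == 0].

(* Main.v *)
Require Import Defs.
From mathcomp Require Import all_boot all_order all_algebra.
From mathcomp Require Import zify.
Set Implicit Arguments. Unset Strict Implicit. Unset Printing Implicit Defensive.

Lemma digitE sm n j t : (j < n)%N -> digit sm n j t = t %/ sm ^ j %% sm.
Proof.
move=> jn; rewrite /digit !modn_divl; congr (_ %/ _).
rewrite -expnS; apply: modn_dvdm; exact: dvdn_exp2l.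
Qed.

Section Blocks.
Variables (sm n i s si : nat).
Hypotheses (sm_gt0 : (0 < sm)%N) (i_lt : (i < n)%N) (si_gt0 : (0 < si)%N)
  (si_le : (si <= sm)%N) (si_dvd : (si %| s * sm)%N) (s_gt0 : (0 < s)%N).

Definition lo t := (t %% sm ^ i)%N.
Definition uu t := (t %/ sm ^ i %% sm)%N.
Definition hi t := (t %/ sm ^ i.+1)%N.
Definition AA t := (hi t %% sm ^ (n - i.+1))%N.
Definition bb t := (hi t %/ sm ^ (n - i.+1))%N.
Definition pp t := (bb t * sm + uu t)%N.
Definition cc := (s * sm %/ si)%N.
Definition blk t := ((AA t * sm ^ i + lo t) * cc + pp t %/ si)%N.

Lemma expn_gt0' e : (0 < sm ^ e)%N.
Proof. by rewrite expn_gt0 sm_gt0. Qed.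

Lemma recon t : t = ((bb t * sm ^ (n - i.+1) + AA t) * sm ^ i.+1 + uu t * sm ^ i + lo t)%N.
Proof.
rewrite /bb /AA -divn_eq /hi /uu /lo.
rewrite {1}(divn_eq t (sm ^ i)); congr (_ + _)%N.
rewrite {1}(divn_eq (t %/ sm ^ i) sm) mulnDl; congr (_ + _)%N.
by rewrite -divnMA -expnSr -mulnA -expnS.
Qed.

Lemma bbE t : bb t = (t %/ sm ^ n)%N.
Proof.
rewrite /bb /hi -divnMA -expnD; congr (_ %/ sm ^ _)%N; lia.
Qed.

Lemma uu_lt t : (uu t < sm)%N.
Proof. by rewrite ltn_mod. Qed.

Lemma cc_gt0 : (0 < cc)%N.
Proof.
rewrite /cc divn_gt0 //; apply: dvdn_leq => //; by rewrite muln_gt0 s_gt0 sm_gt0.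
Qed.

Lemma sicc : (si * cc = s * sm)%N.
Proof. by rewrite /cc mulnC divnK. Qed.

Lemma pp_lt t : (t < s * sm ^ n)%N -> (pp t < si * cc)%N.
Proof.
move=> tl; rewrite sicc /pp.
have : (bb t < s)%N by rewrite bbE ltn_divLR ?expn_gt0' .
have := uu_lt t.
move=> h1 h2.
have : (bb t * sm + sm <= s * sm)%N.
  by rewrite -mulSnr leq_mul2r h2 orbT.
lia.
Qed.

Lemma pp_div_lt t : (t < s * sm ^ n)%N -> (pp t %/ si < cc)%N.
Proof. by move=> tl; rewrite ltn_divLR // mulnC pp_lt. Qed.

Lemma AAlo_lt t : (AA t * sm ^ i + lo t < sm ^ (n - 1))%N.
Proof.
have h1 : (AA t < sm ^ (n - i.+1))%N by rewrite ltn_mod expn_gt0'.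
have h2 : (lo t < sm ^ i)%N by rewrite ltn_mod expn_gt0'.
have -> : (n - 1 = (n - i.+1) + i)%N by lia.
rewrite expnD.
have : (AA t * sm ^ i + sm ^ i <= sm ^ (n - i.+1) * sm ^ i)%N.
  by rewrite -mulSnr leq_mul2r h1 orbT.
lia.
Qed.

Lemma blk_lt t : (t < s * sm ^ n)%N -> (blk t < cc * sm ^ (n - 1))%N.
Proof.
move=> tl; rewrite /blk.
have h1 := AAlo_lt t; have h2 := pp_div_lt tl.
have : ((AA t * sm ^ i + lo t) * cc + cc <= sm ^ (n - 1) * cc)%N.
  by rewrite -mulSnr leq_mul2r h1 orbT.
rewrite [(cc * _)%N]mulnC; lia.
Qed.

Lemma divmod_uniq x y x' y' D : (y < D)%N -> (y' < D)%N ->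
  (x * D + y = x' * D + y')%N -> x = x' /\ y = y'.
Proof.
move=> hy hy' E.
have D0 : (0 < D)%N by lia.
split.
  have := congr1 (divn^~ D) E; rewrite /= !divnMDl // !divn_small //.
  by rewrite !addn0.
by have := congr1 (modn^~ D) E; rewrite /= !modnMDl !modn_small.
Qed.

Lemma blk_eq t t' : (t < s * sm ^ n)%N -> (t' < s * sm ^ n)%N ->
  blk t = blk t' -> [/\ AA t = AA t', lo t = lo t' & pp t %/ si = pp t' %/ si].
Proof.
move=> tl tl' E.
have [E1 E2] := divmod_uniq (pp_div_lt tl) (pp_div_lt tl') E.
have [E3 E4] := divmod_uniq (ltn_pmod t (expn_gt0' i)) (ltn_pmod t' (expn_gt0' i)) E1.
by [].
Qed.

Lemma digit_other t t' j : (j < n)%N -> j != i -> AA t = AA t' -> lo t = lo t' ->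
  digit sm n j t = digit sm n j t'.
Proof.
move=> jn ji EA El; rewrite !digitE //.
case: (ltnP j i) => hj.
  rewrite !modn_divl; congr (_ %/ _)%N.
  have dv : (sm * sm ^ j %| sm ^ i)%N by rewrite -expnS dvdn_exp2l.
  by rewrite -(modn_dvdm t dv) -(modn_dvdm t' dv); move: El; rewrite /lo => ->.
have hj' : (i < j)%N by rewrite ltn_neqAle eq_sym ji hj.
have -> : (sm ^ j = sm ^ i.+1 * sm ^ (j - i.+1))%N by rewrite -expnD; congr (sm ^ _); lia.
rewrite !divnMA -/(hi t) -/(hi t') (modn_divl (hi t)) (modn_divl (hi t')); congr (_ %/ _)%N.
have dv : (sm * sm ^ (j - i.+1) %| sm ^ (n - i.+1))%N by rewrite -expnS dvdn_exp2l //; lia.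
by rewrite -(modn_dvdm (hi t) dv) -(modn_dvdm (hi t') dv); move: EA; rewrite /AA => ->.
Qed.

Lemma uu_pp t : uu t = (pp t %% sm)%N.
Proof. by rewrite /pp modnMDl modn_small // uu_lt. Qed.

Lemma same_u t t' : (t < s * sm ^ n)%N -> (t' < s * sm ^ n)%N ->
  blk t = blk t' -> uu t = uu t' -> t = t'.
Proof.
move=> tl tl' E Eu.
have [EA El Ep] := blk_eq tl tl' E.
have eb : bb t = bb t'.
  have e1 := divn_eq (pp t) si; have e2 := divn_eq (pp t') si.
  have m1 : (pp t %% si < si)%N by rewrite ltn_mod.
  have m2 : (pp t' %% si < si)%N by rewrite ltn_mod.
  move: e1 e2; rewrite Ep /pp Eu => e1 e2.
  case: (ltngtP (bb t) (bb t')) => // hb.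
    have : (bb t * sm + sm <= bb t' * sm)%N by rewrite -mulSnr leq_mul2r hb orbT.
    lia.
  have : (bb t' * sm + sm <= bb t * sm)%N by rewrite -mulSnr leq_mul2r hb orbT.
  lia.
by rewrite (recon t) (recon t') eb EA El Eu.
Qed.

Lemma uu_block t : uu t = ((pp t %/ si * si + pp t %% si) %% sm)%N.
Proof. by rewrite -divn_eq uu_pp. Qed.

End Blocks.

Import GRing.Theory.
Local Open Scope ring_scope.

Lemma GL (F : finFieldType) (I : finType) (P : pred I) (mu z : I -> F) (r : nat) :
  (#|[set mu x | x in P]| <= r)%N ->
  (forall t, (t < r)%N -> \sum_(x | P x) mu x ^+ t * z x = 0) ->
  forall v, \sum_(x | P x && (mu x == v)) z x = 0.
Proof.
move=> Hcard Hs v.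
set S := [set mu x | x in P].
have [vS|vNS] := boolP (v \in S); last first.
  rewrite big1 // => x /andP[Px /eqP mux]; case/negP: vNS; rewrite -mux.
  by apply/imsetP; exists x.
pose Q := \prod_(w <- enum (S :\ v)) ('X - w%:P).
have szQ : (size Q <= r)%N.
  rewrite size_prod_XsubC -cardE; move: Hcard; rewrite (cardsD1 v S) vS; done.
have Qv : Q.[v] != 0.
  by rewrite -/(root Q v) root_prod_XsubC mem_enum in_setD1 eqxx.
have Qmu x : P x -> mu x != v -> Q.[mu x] = 0.
  move=> Px mv; apply/eqP; rewrite -/(root Q (mu x)) root_prod_XsubC mem_enum in_setD1 mv /=.
  by apply/imsetP; exists x.
have E : \sum_(t < r) Q`_t * (\sum_(x | P x) mu x ^+ t * z x) = 0.
  by rewrite big1 // => t _; rewrite Hs ?mulr0.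
have E2 : \sum_(t < r) Q`_t * (\sum_(x | P x) mu x ^+ t * z x)
        = \sum_(x | P x) z x * Q.[mu x].
  rewrite (eq_bigr (fun t : 'I_r => \sum_(x | P x) Q`_t * (mu x ^+ t * z x))); last first.
    by move=> t _; rewrite mulr_sumr.
  rewrite exchange_big /=; apply: eq_bigr => x Px.
  rewrite (horner_coef_wide _ szQ) mulr_sumr; apply: eq_bigr => t _.
  by rewrite mulrA mulrC mulrA.
move: E; rewrite E2 (bigID (fun x => mu x == v)) /= [X in _ + X]big1; last first.
  by move=> x /andP[Px mv]; rewrite Qmu ?mulr0.
rewrite addr0 (eq_bigr (fun x => z x * Q.[v])); last by move=> x /andP[_ /eqP ->].
by rewrite -mulr_suml => /eqP; rewrite mulf_eq0 (negbTE Qv) orbF => /eqP.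
Qed.


Definition Cg (F : finFieldType) (n k sm ell : nat) (lambda : 'I_n -> nat -> F)
  : pred 'M[F]_(n, ell) :=
  fun c => [forall tau : 'I_ell, forall t : 'I_(n - k),
    \sum_(i < n) lambda i (digit sm n i tau) ^+ t * c i tau == 0].

Section Code.
Variables (F : finFieldType) (n k sm ell : nat) (lambda : 'I_n -> nat -> F).
Hypotheses (kn : (k <= n)%N) (sm_gt0 : (0 < sm)%N)
  (lam_inj : forall (i i' : 'I_n) (j j' : nat), (j < sm)%N -> (j' < sm)%N ->
     lambda i j = lambda i' j' -> i = i' /\ j = j').

Local Notation CC := (@Cg F n k sm ell lambda).
Definition mu (j : 'I_n) (t : 'I_ell) := lambda j (digit sm n j t).

Lemma mu_inj j t j' t' : mu j t = mu j' t' -> j = j' /\ digit sm n j t = digit sm n j' t'.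
Proof. by move=> E; apply: lam_inj E; rewrite /digit ltn_mod. Qed.

Lemma CgP (c : 'M[F]_(n, ell)) : reflect (forall (t : 'I_ell) (e : nat), (e < n - k)%N ->
   \sum_(i < n) mu i t ^+ e * c i t = 0) (CC c).
Proof.
apply: (iffP forallP) => [H t e he | H t].
  by have /forallP/(_ (Ordinal he))/eqP := H t.
by apply/forallP => e; apply/eqP; apply: H.
Qed.

Lemma Cg_lin a x y : CC x -> CC y -> CC (a *: x + y).
Proof.
move=> /CgP Hx /CgP Hy; apply/CgP => t e he.
rewrite (eq_bigr (fun i => a * (mu i t ^+ e * x i t) + mu i t ^+ e * y i t)); last first.
  by move=> i _; rewrite !mxE mulrDr mulrCA.
by rewrite big_split /= -mulr_sumr Hx // Hy // mulr0 addr0.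
Qed.

Lemma Cg_uniq (K : {set 'I_n}) e : #|K| = k -> CC e ->
  (forall i, i \in K -> row i e = 0) -> e = 0.
Proof.
move=> cK /CgP He Hrow; apply/matrixP => j t; rewrite mxE.
have Hz i : i \in K -> e i t = 0.
  by move=> iK; have := congr1 (fun M : 'rV[F]_ell => M 0 t) (Hrow i iK); rewrite !mxE.
have [jK|jK] := boolP (j \in K); first exact: Hz.
have := @GL F _ (fun i => i \in ~: K) (mu ^~ t) (e ^~ t) (n - k).
move/(_ _ _ (mu j t)).
rewrite (big_pred1 j); first apply.
- apply: leq_trans (leq_imset_card _ _) _.
  have := cardsC K; rewrite card_ord cK.
  have -> : #|[pred x | x \in ~: K]| = #|~: K| by apply: eq_card.
  lia.
- move=> e' he'; have := He t e' he'; rewrite (bigID (fun i => i \in K)) /=.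
  rewrite [X in X + _]big1 ?add0r; last by move=> i iK; rewrite Hz // mulr0.
  by move=> E; rewrite -[in RHS]E; apply: eq_bigl => i; rewrite in_setC.
- move=> i /=; rewrite in_setC; apply/andP/eqP => [[iK /eqP /mu_inj []] //|->]; by split.
Qed.


Definition resm (c : 'M[F]_(n,ell)) : 'M[F]_(k,ell) :=
  \matrix_(j < k, t < ell) c (widen_ord kn j) t.
Definition syn (c : 'M[F]_(n,ell)) : 'M[F]_(n-k,ell) :=
  \matrix_(e < n-k, t < ell) \sum_(i<n) mu i t ^+ e * c i t.

Lemma CC_syn c : CC c = (syn c == 0).
Proof.
apply/CgP/eqP => [H|H t e he].
  by apply/matrixP => e t; rewrite !mxE H.
by have := congr1 (fun M : 'M[F]_(n-k,ell) => M (Ordinal he) t) H; rewrite !mxE.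
Qed.

Lemma card_CC : #|[set c | CC c]| = (#|F| ^ (k * ell))%N.
Proof.
pose Phi c := (resm c, syn c).
have Kc : #|[set widen_ord kn j | j : 'I_k]| = k.
  by rewrite card_imset ?card_ord // => a b /(congr1 val) /= /val_inj.
have Phi_inj : injective Phi.
  move=> c c' [E1 E2].
  have Ce : CC (c - c').
    rewrite CC_syn; have -> : syn (c - c') = syn c - syn c'.
      apply/matrixP => e t; rewrite !mxE -sumrB; apply: eq_bigr => i _.
      by rewrite !mxE mulrBr.
    by rewrite E2 subrr.
  apply/eqP; rewrite -subr_eq0; apply/eqP; apply: (Cg_uniq Kc Ce).
  move=> i /imsetP [j _ ->]; apply/rowP => t; rewrite !mxE.
  by have := congr1 (fun M : 'M[F]_(k,ell) => M j t) E1; rewrite !mxE => ->; rewrite subrr.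
have onto z : z \in codom Phi.
  apply: (inj_card_onto Phi_inj).
  by rewrite card_prod !card_mx -expnD -mulnDl subnKC.
rewrite -(card_imset _ Phi_inj).
have -> : Phi @: [set c | CC c] = [set (x, 0) | x : 'M[F]_(k,ell)].
  apply/setP => [[x y]]; apply/imsetP/imsetP.
  - move=> [c]; rewrite inE CC_syn => /eqP Hs [-> ->].
    by exists (resm c) => //; rewrite Hs.
  - move=> [x' _ [-> ->]]; have /codomP [c Hc] := onto (x', 0).
    exists c => //; rewrite inE CC_syn; apply/eqP.
    by move: Hc => [_ ->].
by rewrite card_imset ?card_mx // => a b [].
Qed.

Lemma MDS_CC : @is_MDS_array_code F n k ell CC.
Proof.
split.
- by apply/CgP => t e he; rewrite big1 // => i _; rewrite mxE mulr0.
- exact: Cg_lin.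
- exact: card_CC.
- move=> K cK c c' Cc Cc' Hr.
  have Ce : CC ((-1) *: c' + c) by apply: Cg_lin.
  have := Cg_uniq cK Ce.
  have E : (-1) *: c' + c = c - c' by rewrite scaleN1r addrC.
  rewrite E => H; apply/eqP; rewrite -subr_eq0; apply/eqP; apply: H => i iK.
  apply/rowP => t; have := congr1 (fun M : 'rV[F]_ell => M 0 t) (Hr i iK).
  by rewrite !mxE => ->; rewrite subrr.
Qed.

Lemma repair_CC (s si di : nat) : (0 < s)%N -> (0 < si)%N -> (si <= sm)%N ->
  (si %| s * sm)%N -> ell = (s * sm ^ n)%N -> (0 < n)%N -> si = (di - k + 1)%N ->
  (k <= di)%N -> @optimal_repair F n k ell CC 1 di.
Proof.
move=> s_gt0 si_gt0 si_le si_dvd ellE n_gt0 siE kdi.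
have ellE' : ell = (si * cc sm s si * sm ^ (n - 1))%N.
  rewrite ellE (sicc si_dvd) -mulnA -expnS; congr (_ * sm ^ _)%N; lia.
have BE : repair_beta k ell 1 di = (cc sm s si * sm ^ (n - 1))%N.
  by rewrite /repair_beta mul1n -siE ellE' -mulnA mulKn.
split.
  by rewrite mul1n -siE ellE' -mulnA dvdn_mulr.
move=> H R cH cR dHR.
have [h Hh] : exists h, H = [set h] by apply/cards1P; rewrite cH.
have hn : (h < n)%N := ltn_ord h.
have hR : h \notin R by rewrite (disjointFr dHR) // Hh set11.
have tl (t : 'I_ell) : (t < s * sm ^ n)%N by rewrite -ellE ltn_ord.
have blt (t : 'I_ell) : (blk sm n h s si t < repair_beta k ell 1 di)%N.
  by rewrite BE; apply: (blk_lt sm_gt0 hn si_gt0 si_le si_dvd s_gt0 (tl t)).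
pose B := repair_beta k ell 1 di.
pose f := fun (j : 'I_n) (x : 'rV[F]_ell) =>
  \row_(b < B) \sum_(t < ell | blk sm n h s si t == b) x 0 t.
pose g := fun (data : 'I_n -> 'rV[F]_B) =>
  if [pick c | CC c && [forall j in R, f j (row j c) == data j]] is Some c then c else 0.
exists f, g => c Cc i; rewrite Hh inE => /eqP ->.
rewrite /g; case: pickP => [c' /andP [Cc' /forall_inP Hf]|Hn]; last first.
  have := Hn c; rewrite Cc /=; move/negbT/negP; case.
  by apply/forall_inP => j jR; rewrite jR.
pose e := c - c'.
have Ce : CC e.
  have -> : e = (-1) *: c' + c by rewrite scaleN1r addrC.
  exact: Cg_lin.
have He j (b : 'I_B) : j \in R -> \sum_(t < ell | blk sm n h s si t == b) e j t = 0.
  move=> jR; have := Hf j jR; rewrite jR => /eqP E.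
  have := congr1 (fun M : 'rV[F]_B => M 0 b) E; rewrite !mxE => E'.
  rewrite /e (eq_bigr (fun t => c j t - c' j t)); last by move=> t _; rewrite !mxE.
  rewrite sumrB.
  rewrite (eq_bigr (fun t => c' j t)) in E'; last by move=> t _; rewrite !mxE.
  rewrite [X in _ = X](eq_bigr (fun t => c j t)) in E'; last by move=> t _; rewrite !mxE.
  by rewrite E' subrr.
suff K0 : forall t0, e h t0 = 0.
  apply/rowP => t; have := K0 t; rewrite !mxE /e => /eqP; rewrite subr_eq0 => /eqP.
  by move=> ->.
move=> t0.
have BLK (t : 'I_ell) : blk sm n h s si t = blk sm n h s si t0 ->
   [/\ AA sm n h t = AA sm n h t0, lo sm h t = lo sm h t0
     & (pp sm n h t %/ si = pp sm n h t0 %/ si)%N].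
  by apply: (blk_eq sm_gt0 hn si_gt0 si_le si_dvd s_gt0 (tl t) (tl t0)).
have muB (j : 'I_n) (t : 'I_ell) : j != h -> blk sm n h s si t = blk sm n h s si t0 -> mu j t = mu j t0.
  move=> jh /BLK [EA El _]; rewrite /mu.
  by rewrite (digit_other sm_gt0 hn si_gt0 si_le si_dvd s_gt0 (ltn_ord j) jh EA El).
have := @GL F ('I_n * 'I_ell)%type
  (fun p => (p.1 \notin R) && (blk sm n h s si p.2 == blk sm n h s si t0))
  (fun p => mu p.1 p.2) (fun p => e p.1 p.2) (n - k).
move/(_ _ _ (mu h t0)).
rewrite (big_pred1 (h, t0)); first apply.
- pose S1 := [set lambda h ((pp sm n h t0 %/ si * si + val e') %% sm)%N | e' : 'I_si].
  pose S2 := [set mu j t0 | j in ~: R :\ h].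
  have sub : [set mu x.1 x.2 | x in (fun p : ('I_n * 'I_ell)%type =>
      (p.1 \notin R) && (blk sm n h s si p.2 == blk sm n h s si t0))] \subset S1 :|: S2.
    apply/subsetP => _ /imsetP [[j t] /andP [/= jR /eqP bt] ->] /=.
    have [ejh|njh] := eqVneq j h.
      subst j; rewrite inE; apply/orP; left; apply/imsetP.
      exists (Ordinal (ltn_pmod (pp sm n h t) si_gt0)) => //=.
      have [_ _ Ep] := BLK t bt.
      by rewrite /mu digitE // -/(uu sm h t) (uu_block n h si sm_gt0) Ep.
    rewrite inE; apply/orP; right; apply/imsetP; exists j.
      by rewrite in_setD1 in_setC njh.
    exact: muB.
  apply: leq_trans (subset_leq_card sub) _.
  have c1 : (#|S1| <= si)%N by apply: leq_trans (leq_imset_card _ _) _; rewrite card_ord.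
  have c2 : (#|S2| <= n - di - 1)%N.
    apply: leq_trans (leq_imset_card _ _) _.
    have := cardsC R; have := cardsD1 h (~: R); rewrite in_setC hR card_ord cR.
    have -> : #|[pred x | x \in ~: R :\ h]| = #|~: R :\ h| by apply: eq_card.
    lia.
  have dn : (di <= n - 1)%N.
    have := cardsC R; have := cardsD1 h (~: R); rewrite in_setC hR card_ord cR; lia.
  rewrite cardsU; lia.
- move=> t' ht.
  have Z : \sum_(t < ell | blk sm n h s si t == blk sm n h s si t0)
             \sum_(j < n) mu j t ^+ t' * e j t = 0.
    by rewrite big1 // => t _; apply: (CgP _ Ce).
  rewrite exchange_big /= (bigID (fun j => j \in R)) /= in Z.
  rewrite [X in X + _]big1 ?add0r in Z; last first.
    move=> j jR.
    have jh : j != h by apply: contraNneq hR => <-.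
    rewrite (eq_bigr (fun t => mu j t0 ^+ t' * e j t)); last first.
      by move=> t /eqP bt; rewrite (muB j t jh bt).
    by rewrite -mulr_sumr (He j (Ordinal (blt t0)) jR) mulr0.
  by rewrite -[in RHS]Z pair_big_dep.
- move=> [j t] /=; apply/andP/eqP => [[/andP [jR /eqP bt] /eqP /mu_inj [ejh dj]]|[-> ->]].
    subst j; congr pair; apply: val_inj.
    apply: (same_u sm_gt0 hn si_gt0 si_le si_dvd s_gt0 (tl t) (tl t0) bt).
    by move: dj; rewrite !digitE.
  by rewrite hR eqxx.
Qed.

End Code.

Unset Implicit Arguments.

Theorem theorem1 (n k m : nat) (d : nat -> nat) (F : finFieldType)
  (lambda : 'I_n -> nat -> F) :
  (1 <= k)%N -> (k < n)%N -> (1 <= m)%N ->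
  (k < d 1%N)%N ->
  (forall i, (1 <= i)%N -> (i < m)%N -> (d i < d i.+1)%N) ->
  (d m <= n - 1)%N ->
  (s_of k d m * n <= #|F|)%N ->
  (forall (i i' : 'I_n) (j j' : nat), (j < s_of k d m)%N -> (j' < s_of k d m)%N ->
     lambda i j = lambda i' j' -> i = i' /\ j = j') ->
  @is_MDS_array_code F n k (ell_of n k m d) (@C1 F n k m d lambda) /\
  (forall i, (1 <= i <= m)%N -> @optimal_repair F n k (ell_of n k m d) (@C1 F n k m d lambda) 1 (d i)).
Proof.
move=> k1 kn m1 kd1 dinc dm _ lam_inj.
have sm_gt0 : (0 < s_of k d m)%N by rewrite /s_of addn1.
have s_gt0 : (0 < s_lcm k m d)%N.
  rewrite /s_lcm; elim/big_ind: _ => //.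
    by move=> x y; rewrite lcmn_gt0 => -> ->.
  by move=> j _; rewrite /s_of addn1.
have mono i j : (1 <= i)%N -> (i <= j)%N -> (j <= m)%N -> (d i <= d j)%N.
  move=> i1; elim: j => [|j IH]; first by lia.
  rewrite leq_eqVlt => /orP [/eqP <- //|ij] jm.
  apply: leq_trans (IH ij (ltnW jm)) (ltnW (dinc j _ jm)); lia.
split.
  exact: (@MDS_CC F n k (s_of k d m) (ell_of n k m d) lambda (ltnW kn) sm_gt0 lam_inj).
move=> i /andP [i1 im].
have kdi : (k <= d i)%N by have := mono 1%N i (leqnn 1) i1 im; lia.
have dim : (d i <= d m)%N by apply: mono.
apply: (@repair_CC F n k (s_of k d m) (ell_of n k m d) lambda (ltnW kn) sm_gt0 lam_inj
   (s_lcm k m d) (s_of k d i) (d i)) => //.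
- by rewrite /s_of addn1.
- rewrite /s_of; lia.
- rewrite leq_eqVlt in im; case/orP: im => [/eqP ->|im]; first by rewrite dvdn_mull.
  apply: dvdn_mulr; rewrite /s_lcm (bigD1_seq i) ?mem_index_iota ?i1 ?im ?iota_uniq //=.
  exact: dvdn_lcml.
- lia.
Qed.
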